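(* Let $n\ge 2$, let $d$ be a positive even integer, and let $f$ be a form (homogeneous polynomial with real coefficients) of degree $d$ in $n$ variables. The following statements are equivalent: (i) $f$ is nonnegative on $\mathbb{R}^n$ and the function $x\mapsto f(x)^{1/d}$ is a norm on $\mathbb{R}^n$; (ii) $f$ is convex and positive definite, i.e. $f(x)>0$ for all $x\neq 0$; (iii) $f$ is strictly convex, i.e. $f(\lambda x+(1-\lambda)y)<\lambda f(x)+(1-\lambda)f(y)$ for all $x\neq y$ in $\mathbb{R}^n$ and all $\lambda\in(0,1)$.
   Context: A norm on $\mathbb{R}^n$ is a function $g:\mathbb{R}^n\to\mathbb{R}$ with $g(x)>0$ for $x\neq0$, $g(0)=0$, $g(\lambda x)=|\lambda|g(x)$ for all $\lambda\in\mathbb{R}$, $x\in\mathbb{R}^n$, and $g(x+y)\le g(x)+g(y)$ for all $x,y$. *)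

(* Defs.v *)
From Stdlib Require Import Reals List.
Open Scope R_scope.

(* Points of R^n are represented as functions nat -> R; only the first n
   coordinates (indices 0..n-1) are meaningful.  All notions below only look
   at these coordinates. *)

Fixpoint monom (n : nat) (a : nat -> nat) (x : nat -> R) : R :=
  match n with
  | O => 1
  | S m => monom m a x * x m ^ a m
  end.

Fixpoint mdeg (n : nat) (a : nat -> nat) : nat :=
  match n with
  | O => O
  | S m => (mdeg m a + a m)%nat
  end.

Definition poly_eval (n : nat) (l : list (R * (nat -> nat))) (x : nat -> R) : R :=
  fold_right (fun p acc => fst p * monom n (snd p) x + acc) 0 l.

Definition is_form (n d : nat) (f : (nat -> R) -> R) : Prop :=
  exists l : list (R * (nat -> nat)),
    (forall p, In p l -> mdeg n (snd p) = d) /\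
    (forall x, f x = poly_eval n l x).

Definition vzero : nat -> R := fun _ => 0.
Definition vadd (x y : nat -> R) : nat -> R := fun i => x i + y i.
Definition vscal (c : R) (x : nat -> R) : nat -> R := fun i => c * x i.

Definition is_zero_vec (n : nat) (x : nat -> R) : Prop := forall i, (i < n)%nat -> x i = 0.
Definition neq_vec (n : nat) (x y : nat -> R) : Prop := exists i, (i < n)%nat /\ x i <> y i.

Definition is_norm (n : nat) (g : (nat -> R) -> R) : Prop :=
  (forall x, neq_vec n x vzero -> 0 < g x) /\
  (forall x, is_zero_vec n x -> g x = 0) /\
  (forall (c : R) x, g (vscal c x) = Rabs c * g x) /\
  (forall x y, g (vadd x y) <= g x + g y).

(* The real d-th root of a nonnegative number y (0 for y <= 0). *)
Definition droot (d : nat) (y : R) : R :=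
  if Rle_dec y 0 then 0 else Rpower y (/ INR d).

Definition convex_on (n : nat) (f : (nat -> R) -> R) : Prop :=
  forall x y (l : R), 0 <= l <= 1 ->
    f (vadd (vscal l x) (vscal (1 - l) y)) <= l * f x + (1 - l) * f y.

Definition strictly_convex_on (n : nat) (f : (nat -> R) -> R) : Prop :=
  forall x y (l : R), neq_vec n x y -> 0 < l < 1 ->
    f (vadd (vscal l x) (vscal (1 - l) y)) < l * f x + (1 - l) * f y.

Definition pos_def (n : nat) (f : (nat -> R) -> R) : Prop :=
  forall x, neq_vec n x vzero -> 0 < f x.

(* Main.v *)
Require Import Defs.
From Stdlib Require Import Reals Arith Lra Lia Psatz Classical FunctionalExtensionality ZArith List.
Open Scope R_scope.

Fixpoint Pk (k : nat) (p : R -> R) : Prop :=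
  match k with
  | O => forall t s, p t = p s
  | S k' => forall h, Pk k' (fun t => p (t + h) - p t)
  end.

Lemma Pk_ext k : forall p q, (forall t, p t = q t) -> Pk k p -> Pk k q.
Proof.
  induction k as [|k IH]; simpl; intros p q E H.
  - intros t s. rewrite <- !E. apply H.
  - intros h. apply (IH (fun t => p (t+h) - p t)). intros t. rewrite !E. reflexivity. apply H.
Qed.

Lemma Pk_add k : forall p q, Pk k p -> Pk k q -> Pk k (fun t => p t + q t).
Proof.
  induction k as [|k IH]; simpl; intros p q Hp Hq.
  - intros t s. rewrite (Hp t s), (Hq t s). reflexivity.
  - intros h. eapply Pk_ext; [|apply (IH _ _ (Hp h) (Hq h))]. intros t; simpl; ring.
Qed.

Lemma Pk_scal k : forall c p, Pk k p -> Pk k (fun t => c * p t).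
Proof.
  induction k as [|k IH]; simpl; intros c p Hp.
  - intros t s. rewrite (Hp t s). reflexivity.
  - intros h. eapply Pk_ext; [|apply (IH c _ (Hp h))]. intros t; simpl; ring.
Qed.

Lemma Pk_S k : forall p, Pk k p -> Pk (S k) p.
Proof.
  induction k as [|k IH]; intros p Hp.
  - simpl. intros h t s. simpl in Hp. rewrite (Hp (t+h) (s+h)), (Hp t s). reflexivity.
  - intros h. exact (IH _ (Hp h)).
Qed.

Lemma Pk_le k m p : (k <= m)%nat -> Pk k p -> Pk m p.
Proof. induction 1; auto. intros; apply Pk_S; auto. Qed.

Lemma Pk_shift k : forall p s, Pk k p -> Pk k (fun t => p (t + s)).
Proof.
  induction k as [|k IH]; simpl; intros p s Hp.
  - intros t u. apply Hp.
  - intros h. eapply Pk_ext; [|apply (IH _ s (Hp h))]. intros t; simpl.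
    replace (t + s + h) with (t + h + s) by ring. reflexivity.
Qed.

Lemma Pk_mul N : forall k m p q, (k + m = N)%nat -> Pk k p -> Pk m q ->
  Pk N (fun t => p t * q t).
Proof.
  induction N as [|N IH]; intros k m p q E Hp Hq.
  - assert (k = 0%nat) by lia. assert (m = 0%nat) by lia. subst. simpl in *.
    intros t s. rewrite (Hp t s), (Hq t s). reflexivity.
  - destruct k as [|k].
    + simpl in E. subst m. eapply Pk_ext; [|apply (Pk_scal _ (p 0) q Hq)].
      intros t; simpl. simpl in Hp. rewrite (Hp t 0). reflexivity.
    + destruct m as [|m].
      * assert (k = N) by lia. subst k. eapply Pk_ext; [|apply (Pk_scal _ (q 0) p Hp)].
        intros t; simpl. simpl in Hq. rewrite (Hq t 0). ring.
      * simpl. intros h.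
        eapply Pk_ext; [|apply Pk_add;
          [apply (IH k (S m) (fun t => p (t+h) - p t) (fun t => q (t + h))); [lia| apply Hp | apply Pk_shift; exact Hq]
          |apply (IH (S k) m p (fun t => q (t+h) - q t)); [lia| exact Hp| apply Hq]]].
        intros t; simpl; ring.
Qed.

Lemma Pk_affine a b : Pk 1 (fun t => a + t * b).
Proof. simpl. intros h t s. ring. Qed.

Lemma Pk_pow j : forall a b, Pk j (fun t => (a + t * b) ^ j).
Proof.
  induction j as [|j IH]; intros a b.
  - simpl. intros; reflexivity.
  - exact (Pk_mul (S j) 1 j (fun t => a + t*b) (fun t => (a+t*b)^j) eq_refl (Pk_affine a b) (IH a b)).
Qed.

Definition IsPoly (p : R -> R) := exists k, Pk k p.

Lemma IsPoly_ext p q : (forall t, p t = q t) -> IsPoly p -> IsPoly q.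
Proof. intros E [k H]; exists k; eapply Pk_ext; eauto. Qed.

Lemma IsPoly_const c : IsPoly (fun _ => c).
Proof. exists 0%nat; simpl; reflexivity. Qed.

Lemma IsPoly_add p q : IsPoly p -> IsPoly q -> IsPoly (fun t => p t + q t).
Proof.
  intros [k Hk] [m Hm]; exists (Nat.max k m). apply Pk_add; [apply (Pk_le k)|apply (Pk_le m)]; auto; lia.
Qed.

Lemma IsPoly_mul p q : IsPoly p -> IsPoly q -> IsPoly (fun t => p t * q t).
Proof. intros [k Hk] [m Hm]; exists (k+m)%nat. eapply Pk_mul; eauto. Qed.

Lemma IsPoly_id : IsPoly (fun t => t).
Proof. exists 1%nat. eapply Pk_ext; [|apply (Pk_affine 0 1)]. intros; simpl; ring. Qed.

Lemma monom_poly n a x v : IsPoly (fun t => monom n a (vadd x (vscal t v))).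
Proof.
  induction n as [|n IH]; simpl.
  - apply IsPoly_const.
  - apply IsPoly_mul; auto. exists (a n). unfold vadd, vscal.
    eapply Pk_ext; [|apply (Pk_pow (a n) (x n) (v n))]. intros; simpl. ring_simplify. reflexivity.
Qed.

Lemma poly_eval_poly n l x v : IsPoly (fun t => poly_eval n l (vadd x (vscal t v))).
Proof.
  induction l as [|p l IH]; unfold poly_eval; simpl.
  - apply IsPoly_const.
  - apply IsPoly_add; auto. apply IsPoly_mul. apply IsPoly_const. apply monom_poly.
Qed.

Lemma exists_nat r : exists N : nat, r <= INR N.
Proof.
  destruct (archimed r) as [H1 _].
  destruct (Z_le_gt_dec 0 (up r)) as [Hz|Hz].
  - exists (Z.to_nat (up r)). rewrite INR_IZR_INZ, Z2Nat.id by lia. lra.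
  - exists 0%nat. simpl. assert (Hz2 : (up r < 0)%Z) by lia. apply IZR_lt in Hz2. lra.
Qed.

Lemma Pk_const_interval k : forall p a b, a < b -> Pk k p ->
  (forall t, a <= t <= b -> p t = p a) -> forall t, p t = p a.
Proof.
  induction k as [|k IH]; intros p a b Hab Hp Hc t.
  - apply Hp.
  - set (dl := (b - a) / 2).
    assert (Hdl : 0 < dl) by (unfold dl; lra).
    assert (step : forall h, 0 < h <= dl -> forall s, p (s + h) = p s).
    { intros h Hh s.
      assert (E := IH (fun t => p (t+h) - p t) a (a + dl) ltac:(lra) (Hp h)).
      simpl in E.
      assert (E2 : forall t, a <= t <= a + dl -> p (t + h) - p t = p (a + h) - p a).
      { intros u Hu. rewrite (Hc u), (Hc (u+h)), (Hc (a+h)); unfold dl in *; lra. }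
      specialize (E E2 s).
      rewrite (Hc (a+h)) in E by (unfold dl in *; lra). lra. }
    assert (iter : forall h, 0 < h <= dl -> forall j s, p (s + INR j * h) = p s).
    { intros h Hh j; induction j as [|j IHj]; intros s.
      - simpl. f_equal. ring.
      - rewrite S_INR. replace (s + (INR j + 1) * h) with ((s + INR j * h) + h) by ring.
        rewrite step by auto. apply IHj. }
    destruct (exists_nat (Rabs (t - a) / dl)) as [N HN].
    assert (HN1 : Rabs (t - a) / dl <= INR (S N)) by (rewrite S_INR; lra).
    assert (HNp : 0 < INR (S N)) by (apply lt_0_INR; lia).
    assert (Hb : Rabs (t - a) <= INR (S N) * dl).
    { apply Rmult_le_compat_r with (r := dl) in HN1; [|lra].
      unfold Rdiv in HN1. rewrite Rmult_assoc, Rinv_l, Rmult_1_r in HN1 by lra. lra. }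
    destruct (Rtotal_order t a) as [Hlt|[Heq|Hgt]].
    + rewrite Rabs_left in Hb by lra.
      set (h := (a - t) / INR (S N)).
      assert (Hh : 0 < h <= dl).
      { unfold h; split. apply Rdiv_lt_0_compat; lra.
        apply Rmult_le_reg_l with (INR (S N)); auto. field_simplify; lra. }
      rewrite <- (iter h Hh (S N) t). f_equal. unfold h. field. lra.
    + subst; reflexivity.
    + rewrite Rabs_right in Hb by lra.
      set (h := (t - a) / INR (S N)).
      assert (Hh : 0 < h <= dl).
      { unfold h; split. apply Rdiv_lt_0_compat; lra.
        apply Rmult_le_reg_l with (INR (S N)); auto. field_simplify; lra. }
      rewrite <- (iter h Hh (S N) a). f_equal. unfold h. field. lra.
Qed.

Lemma monom_scal n a c x : monom n a (vscal c x) = c ^ mdeg n a * monom n a x.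
Proof.
  induction n as [|n IH]; simpl. ring. rewrite IH. unfold vscal.
  rewrite Rpow_mult_distr, pow_add. ring.
Qed.

Lemma poly_eval_scal n d l c x : (forall p, In p l -> mdeg n (snd p) = d) ->
  poly_eval n l (vscal c x) = c ^ d * poly_eval n l x.
Proof.
  induction l as [|p l IH]; intros H; unfold poly_eval in *; simpl. ring.
  rewrite monom_scal, H by (left; auto). rewrite IH by (intros; apply H; right; auto). ring.
Qed.

Lemma monom_coord n a x y : (forall i, (i < n)%nat -> x i = y i) -> monom n a x = monom n a y.
Proof.
  induction n as [|n IH]; intros H; simpl; auto.
  rewrite IH by (intros; apply H; lia). rewrite H by lia. reflexivity.
Qed.

Lemma poly_eval_coord n l x y : (forall i, (i < n)%nat -> x i = y i) -> poly_eval n l x = poly_eval n l y.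
Proof.
  intros H; induction l as [|p l IH]; unfold poly_eval in *; simpl; auto.
  rewrite IH, (monom_coord n _ x y H). reflexivity.
Qed.

Lemma pow_lt_nn u w k : 0 <= u < w -> u ^ (S k) < w ^ (S k).
Proof.
  intros H; induction k as [|k IH]. simpl; lra.
  change (u * u ^ (S k) < w * w ^ (S k)).
  apply Rmult_le_0_lt_compat; try lra; auto. apply pow_le; lra.
Qed.

Lemma pow_inj_nn d u w : (0 < d)%nat -> 0 <= u -> 0 <= w -> u ^ d = w ^ d -> u = w.
Proof.
  intros hd Hu Hw E. destruct d as [|k]; [lia|].
  destruct (Rtotal_order u w) as [H|[H|H]]; auto.
  - pose proof (pow_lt_nn u w k ltac:(lra)). lra.
  - pose proof (pow_lt_nn w u k ltac:(lra)). lra.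
Qed.

Lemma droot_nonneg d y : 0 <= droot d y.
Proof. unfold droot; destruct Rle_dec; [lra|]. unfold Rpower; left; apply exp_pos. Qed.

Lemma droot_pos d y : 0 < y -> 0 < droot d y.
Proof. intros H; unfold droot; destruct Rle_dec; [lra|]. unfold Rpower; apply exp_pos. Qed.

Lemma droot_zero d : droot d 0 = 0.
Proof. unfold droot; destruct Rle_dec; [reflexivity|lra]. Qed.

Lemma droot_pow d y : (0 < d)%nat -> 0 <= y -> droot d y ^ d = y.
Proof.
  intros hd Hy. unfold droot; destruct Rle_dec.
  - assert (y = 0) by lra. subst. apply pow_i; auto.
  - rewrite <- Rpower_pow by (unfold Rpower; apply exp_pos).
    rewrite Rpower_mult, Rinv_l, Rpower_1 by (try lra; apply not_0_INR; lia). reflexivity.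
Qed.

Lemma pow_droot d a : (0 < d)%nat -> 0 <= a -> droot d (a ^ d) = a.
Proof.
  intros hd Ha. apply (pow_inj_nn d); auto. apply droot_nonneg.
  apply droot_pow; auto. apply pow_le; auto.
Qed.

Lemma droot_mono d y1 y2 : (0 < d)%nat -> 0 <= y1 <= y2 -> droot d y1 <= droot d y2.
Proof.
  intros hd H. destruct (Rle_lt_dec (droot d y1) (droot d y2)) as [h|h]; auto.
  destruct d as [|k]; [lia|].
  pose proof (pow_lt_nn _ _ k (conj (droot_nonneg (S k) y2) h)).
  rewrite !droot_pow in H0 by (auto; lra). lra.
Qed.

Lemma droot_mul d a y : (0 < d)%nat -> 0 <= a -> 0 <= y -> droot d (a ^ d * y) = a * droot d y.
Proof.
  intros hd Ha Hy. apply (pow_inj_nn d); auto. apply droot_nonneg.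
  apply Rmult_le_pos; auto; apply droot_nonneg.
  rewrite droot_pow, Rpow_mult_distr, droot_pow; auto.
  apply Rmult_le_pos; auto; apply pow_le; auto.
Qed.

Lemma pow_convex k : forall a b l, 0 <= a -> 0 <= b -> 0 <= l <= 1 ->
  (l * a + (1 - l) * b) ^ k <= l * a ^ k + (1 - l) * b ^ k.
Proof.
  induction k as [|k IH]; intros a b l Ha Hb Hl.
  - simpl; lra.
  - change ((l * a + (1 - l) * b) * (l * a + (1 - l) * b) ^ k <= l * (a * a ^ k) + (1 - l) * (b * b ^ k)).
    apply Rle_trans with ((l * a + (1 - l) * b) * (l * a ^ k + (1 - l) * b ^ k)).
    + apply Rmult_le_compat_l; [nra|]. apply IH; auto.
    + assert (E : l * (a * a ^ k) + (1 - l) * (b * b ^ k) -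
                  (l * a + (1 - l) * b) * (l * a ^ k + (1 - l) * b ^ k)
                  = (l * (1 - l)) * ((a - b) * (a ^ k - b ^ k))) by ring.
      assert (0 <= (a - b) * (a ^ k - b ^ k)).
      { destruct (Rle_dec a b).
        - pose proof (pow_incr a b k ltac:(lra)). nra.
        - pose proof (pow_incr b a k ltac:(lra)). nra. }
      assert (0 <= l * (1 - l)) by nra. nra.
Qed.

Theorem theorem1 (n d : nat) (f : (nat -> R) -> R)
  (hn : (2 <= n)%nat) (hd : (0 < d)%nat) (hev : Nat.Even d)
  (hf : is_form n d f) :
  ((forall x, 0 <= f x) /\ is_norm n (fun x => droot d (f x))
     <-> convex_on n f /\ pos_def n f) /\
  (convex_on n f /\ pos_def n f <-> strictly_convex_on n f).
Proof.
  destruct hf as [l [Hdeg HF]].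
  assert (fscal : forall c x, f (vscal c x) = c ^ d * f x).
  { intros. rewrite !HF. apply poly_eval_scal; auto. }
  assert (fcoord : forall x y, (forall i, (i<n)%nat -> x i = y i) -> f x = f y).
  { intros. rewrite !HF. apply poly_eval_coord; auto. }
  assert (f0 : forall x, is_zero_vec n x -> f x = 0).
  { intros x Hx. rewrite (fcoord x (vscal 0 x)). rewrite fscal, pow_i by auto. ring.
    intros i Hi. unfold vscal. rewrite Hx by auto. ring. }
  assert (peven : forall c, c ^ d = Rabs c ^ d).
  { intros c. destruct hev as [m Hm]. rewrite Hm, !pow_mult. f_equal.
    simpl. rewrite !Rmult_1_r. rewrite <- Rabs_mult. rewrite Rabs_right. reflexivity. nra. }
  assert (fneg : forall x, f (vscal (-1) x) = f x).
  { intros. rewrite fscal, peven. replace (Rabs (-1)) with 1 by (rewrite Rabs_left; lra). rewrite pow1. ring. }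
  assert (nz : forall x, ~ neq_vec n x vzero -> is_zero_vec n x).
  { intros x H i Hi. destruct (Req_dec (x i) 0); auto. exfalso; apply H. exists i; split; auto. }
  assert (poly : forall x v, IsPoly (fun t => f (vadd x (vscal t v)))).
  { intros. eapply IsPoly_ext; [|apply (poly_eval_poly n l x v)]. intros; simpl; rewrite HF; reflexivity. }
  assert (pdnn : pos_def n f -> forall x, 0 <= f x).
  { intros Hp x. destruct (classic (neq_vec n x vzero)) as [H|H].
    left; auto. right; symmetry; apply f0, nz, H. }
  assert (C2to1 : convex_on n f /\ pos_def n f -> (forall x, 0 <= f x) /\ is_norm n (fun x => droot d (f x))).
  { intros [Hc Hp]. pose proof (pdnn Hp) as fnn.
    split; auto. split; [|split; [|split]].
    - intros x Hx. apply droot_pos, Hp, Hx.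
    - intros x Hx. rewrite f0 by auto. apply droot_zero.
    - intros c x. rewrite fscal, peven. apply droot_mul; auto. apply Rabs_pos.
    - intros x y.
      destruct (Req_dec (f x) 0) as [Ex|Ex].
      { assert (Zx : is_zero_vec n x).
        { apply nz. intros H. specialize (Hp x H). lra. }
        rewrite (fcoord (vadd x y) y). rewrite Ex, droot_zero. lra.
        intros i Hi. unfold vadd. rewrite Zx by auto. ring. }
      destruct (Req_dec (f y) 0) as [Ey|Ey].
      { assert (Zy : is_zero_vec n y).
        { apply nz. intros H. specialize (Hp y H). lra. }
        rewrite (fcoord (vadd x y) x). rewrite Ey, droot_zero. lra.
        intros i Hi. unfold vadd. rewrite Zy by auto. ring. }
      set (a := droot d (f x)). set (b := droot d (f y)).
      assert (Ha : 0 < a) by (apply droot_pos; pose proof (fnn x); lra).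
      assert (Hb : 0 < b) by (apply droot_pos; pose proof (fnn y); lra).
      assert (Hax : a ^ d = f x) by (apply droot_pow; auto).
      assert (Hby : b ^ d = f y) by (apply droot_pow; auto).
      set (lam := a / (a + b)).
      assert (Hlam : 0 <= lam <= 1).
      { unfold lam; split. apply Rlt_le, Rdiv_lt_0_compat; lra.
        apply Rmult_le_reg_r with (a+b); [lra|]. unfold Rdiv. rewrite Rmult_assoc, Rinv_l; lra. }
      assert (Hx1 : f (vscal (/a) x) = 1).
      { rewrite fscal, <- Hax, <- Rpow_mult_distr, Rinv_l, pow1; lra. }
      assert (Hy1 : f (vscal (/b) y) = 1).
      { rewrite fscal, <- Hby, <- Rpow_mult_distr, Rinv_l, pow1; lra. }
      set (w := vadd (vscal lam (vscal (/a) x)) (vscal (1 - lam) (vscal (/b) y))).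
      assert (Hw : f w <= 1).
      { pose proof (Hc (vscal (/a) x) (vscal (/b) y) lam Hlam) as H. fold w in H.
        rewrite Hx1, Hy1 in H. lra. }
      assert (Exy : vadd x y = vscal (a + b) w).
      { apply functional_extensionality; intros i. unfold w, vadd, vscal, lam. field. lra. }
      rewrite Exy, fscal. rewrite droot_mul by (auto; lra).
      assert (droot d (f w) <= 1).
      { rewrite <- (pow_droot d 1) by (auto; lra). rewrite pow1.
        apply droot_mono; auto. }
      pose proof (droot_nonneg d (f w)). nra. }
  assert (C1to2 : (forall x, 0 <= f x) /\ is_norm n (fun x => droot d (f x)) -> convex_on n f /\ pos_def n f).
  { intros [fnn [Np [Nz [Ns Nt]]]]. split.
    - intros x y lm Hl.
      set (z := vadd (vscal lm x) (vscal (1 - lm) y)).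
      assert (Hg : droot d (f z) <= lm * droot d (f x) + (1 - lm) * droot d (f y)).
      { eapply Rle_trans. apply Nt. simpl in Ns. rewrite !Ns, !Rabs_right by lra. lra. }
      replace (f z) with (droot d (f z) ^ d) by (apply droot_pow; auto).
      replace (f x) with (droot d (f x) ^ d) by (apply droot_pow; auto).
      replace (f y) with (droot d (f y) ^ d) by (apply droot_pow; auto).
      eapply Rle_trans. apply pow_incr. split. apply droot_nonneg. exact Hg.
      apply pow_convex; auto; apply droot_nonneg.
    - intros x Hx. specialize (Np x Hx). simpl in Np. unfold droot in Np. destruct Rle_dec; lra. }
  assert (C3to2 : strictly_convex_on n f -> convex_on n f /\ pos_def n f).
  { intros Hs. split.
    - intros x y lm Hl.
      destruct (classic (neq_vec n x y)) as [H|H].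
      + destruct (Req_dec lm 0) as [E0|E0].
        * subst lm. replace (vadd (vscal 0 x) (vscal (1-0) y)) with y. lra.
          apply functional_extensionality; intros i; unfold vadd, vscal; ring.
        * destruct (Req_dec lm 1) as [E1|E1].
          -- subst. replace (vadd (vscal 1 x) (vscal (1-1) y)) with x. lra.
             apply functional_extensionality; intros i; unfold vadd, vscal; ring.
          -- left. apply Hs; auto; lra.
      + assert (Exy : forall i, (i<n)%nat -> x i = y i).
        { intros i Hi. destruct (Req_dec (x i) (y i)); auto. exfalso; apply H; exists i; auto. }
        rewrite (fcoord _ x), (fcoord y x). right; ring.
        intros; symmetry; apply Exy; auto.
        intros i Hi; unfold vadd, vscal. rewrite (Exy i Hi). ring.
    - intros x Hx.
      assert (Hn : neq_vec n x (vscal (-1) x)).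
      { destruct Hx as [i [Hi Hxi]]. exists i; split; auto. unfold vscal, vzero in *.
        intro; apply Hxi; lra. }
      pose proof (Hs x (vscal (-1) x) (1/2) Hn ltac:(lra)) as H.
      rewrite fneg in H. replace (vadd (vscal (1/2) x) (vscal (1 - 1/2) (vscal (-1) x))) with (vscal 0 x) in H.
      rewrite fscal, pow_i in H by auto. lra.
      apply functional_extensionality; intros i; unfold vadd, vscal; field. }
  assert (C2to3 : convex_on n f /\ pos_def n f -> strictly_convex_on n f).
  { intros [Hc Hp] x y lm Hxy Hl. pose proof (pdnn Hp) as fnn.
    destruct (Rlt_le_dec (f (vadd (vscal lm x) (vscal (1 - lm) y))) (lm * f x + (1 - lm) * f y)) as [Hlt|Hge]; auto.
    exfalso.
    set (v := vadd x (vscal (-1) y)).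
    set (phi := fun t => f (vadd y (vscal t v))).
    assert (phic : forall mu a b, 0 <= mu <= 1 -> phi (mu * a + (1 - mu) * b) <= mu * phi a + (1 - mu) * phi b).
    { intros mu a b Hmu. pose proof (Hc (vadd y (vscal a v)) (vadd y (vscal b v)) mu Hmu) as H.
      unfold phi. replace (vadd y (vscal (mu*a+(1-mu)*b) v)) with (vadd (vscal mu (vadd y (vscal a v))) (vscal (1-mu) (vadd y (vscal b v)))); [exact H|].
      apply functional_extensionality; intros i; unfold vadd, vscal; ring. }
    assert (phi0 : phi 0 = f y).
    { unfold phi; f_equal; apply functional_extensionality; intros i; unfold vadd,vscal; ring. }
    assert (phi1 : phi 1 = f x).
    { unfold phi; f_equal; apply functional_extensionality; intros i; unfold v, vadd,vscal; ring. }
    assert (phil : phi lm >= lm * phi 1 + (1 - lm) * phi 0).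
    { rewrite phi0, phi1. replace (phi lm) with (f (vadd (vscal lm x) (vscal (1 - lm) y))). lra.
      unfold phi; f_equal; apply functional_extensionality; intros i; unfold v,vadd,vscal; ring. }
    set (psi := fun t => phi t - (phi 0 + t * (phi 1 - phi 0))).
    assert (psi_poly : IsPoly psi).
    { apply IsPoly_ext with (p := fun t => phi t + (-1) * (phi 0 + t * (phi 1 - phi 0))).
      intros; unfold psi; ring.
      apply IsPoly_add; [exact (poly y v)| apply IsPoly_mul; [apply IsPoly_const| apply IsPoly_add; [apply IsPoly_const| apply IsPoly_mul; [apply IsPoly_id|apply IsPoly_const]]]]. }
    assert (psi_le : forall t, 0 <= t <= 1 -> psi t <= 0).
    { intros t Ht. unfold psi. pose proof (phic t 1 0 Ht) as H. replace (t*1 + (1-t)*0) with t in H by ring. lra. }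
    assert (psi_ge : forall t, 0 <= t <= lm -> 0 <= psi t).
    { intros t Ht. set (mu := (1 - lm) / (1 - t)).
      assert (Hmu : 0 < mu <= 1).
      { unfold mu; split. apply Rdiv_lt_0_compat; lra.
        apply Rmult_le_reg_r with (1-t); [lra|]. unfold Rdiv. rewrite Rmult_assoc, Rinv_l; lra. }
      assert (Emu : mu * t + (1 - mu) * 1 = lm). { unfold mu; field; lra. }
      pose proof (phic mu t 1 (conj (Rlt_le _ _ (proj1 Hmu)) (proj2 Hmu))) as H. rewrite Emu in H.
      assert (E2 : mu * (1 - t) = 1 - lm) by (unfold mu; field; lra).
      assert (E3 : mu * t = lm - 1 + mu) by lra.
      assert (K : mu * psi t = mu * phi t - (mu*t) * phi 1 - (mu*(1-t)) * phi 0) by (unfold psi; ring).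
      rewrite E2, E3 in K.
      assert (0 <= mu * psi t) by (rewrite K; lra).
      apply Rmult_le_reg_l with mu; lra. }
    assert (psi00 : psi 0 = 0) by (unfold psi; ring).
    assert (psi0 : forall t, psi t = psi 0).
    { destruct psi_poly as [k Hk]. apply (Pk_const_interval k psi 0 lm); auto; [lra|].
      intros t Ht. rewrite psi00. pose proof (psi_le t ltac:(lra)). pose proof (psi_ge t Ht). lra. }
    assert (phi_aff : forall t, phi t = phi 0 + t * (phi 1 - phi 0)).
    { intros t. pose proof (psi0 t) as H. rewrite psi00 in H. unfold psi in H. lra. }
    assert (phinn : forall t, 0 <= phi t) by (intros; unfold phi; apply fnn).
    assert (beta0 : phi 1 = phi 0).
    { destruct (Req_dec (phi 1 - phi 0) 0) as [E|E]; [lra|].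
      pose proof (phi_aff (-(phi 0 + 1)/(phi 1 - phi 0))) as H.
      replace ((-(phi 0 + 1)/(phi 1 - phi 0)) * (phi 1 - phi 0)) with (-(phi 0 + 1)) in H by (field; auto).
      pose proof (phinn (-(phi 0 + 1)/(phi 1 - phi 0))). lra. }
    set (c := phi 0).
    assert (phic0 : forall t, phi t = c). { intros t; rewrite phi_aff, beta0; unfold c; ring. }
    assert (Hc0 : 0 <= c) by (apply phinn).
    assert (Hv : neq_vec n v vzero).
    { destruct Hxy as [i [Hi Hne]]. exists i; split; auto. unfold v, vadd, vscal, vzero. intro; apply Hne; lra. }
    pose proof (Hp v Hv) as fv.
    assert (Hsc : forall s, 0 < s -> f v <= s ^ d * c).
    { intros s Hs.
      assert (E1 : f (vadd (vscal s y) v) = s ^ d * c).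
      { rewrite <- (phic0 (/s)). unfold phi. rewrite <- fscal. f_equal.
        apply functional_extensionality; intros i; unfold vadd, vscal; field; lra. }
      assert (E2 : f (vadd (vscal (-s) y) v) = s ^ d * c).
      { rewrite <- (phic0 (-/s)). unfold phi. replace (s ^ d) with ((-s)^d).
        rewrite <- fscal. f_equal.
        apply functional_extensionality; intros i; unfold vadd, vscal; field; lra.
        rewrite (peven (-s)), (peven s), Rabs_Ropp. reflexivity. }
      pose proof (Hc (vadd (vscal s y) v) (vadd (vscal (-s) y) v) (1/2) ltac:(lra)) as H.
      rewrite E1, E2 in H.
      replace (vadd (vscal (1 / 2) (vadd (vscal s y) v)) (vscal (1 - 1 / 2) (vadd (vscal (- s) y) v))) with v in H.
      lra.
      apply functional_extensionality; intros i; unfold vadd, vscal; field. }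
    set (s := f v / (f v + c + 1)).
    assert (Hs : 0 < s < 1).
    { unfold s; split. apply Rdiv_lt_0_compat; lra.
      apply Rmult_lt_reg_r with (f v + c + 1); [lra|]. unfold Rdiv. rewrite Rmult_assoc, Rinv_l; lra. }
    assert (sd : s ^ d <= s).
    { destruct d as [|k]; [lia|]. simpl. pose proof (pow_incr s 1 k ltac:(lra)). rewrite pow1 in H.
      pose proof (pow_le s k ltac:(lra)). nra. }
    assert (sc : s * c < f v).
    { unfold s. apply Rmult_lt_reg_r with (f v + c + 1); [lra|].
      replace (f v / (f v + c + 1) * c * (f v + c + 1)) with (f v * c) by (field; lra). nra. }
    pose proof (Hsc s (proj1 Hs)). nra. }
  split; split; auto.
Qed.
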